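(* Let $\mathtt{p}$ be a CF program that terminates on every input and that does not have call overlap. Then $\mathtt{p}$ is in CFpoly, i.e., there is a polynomial $\pi$ with $\mathit{time}_{\mathtt{p}}(x)\le\pi(|x|)$ for all $x\in\{0,1\}^*$.
   Context: CF (''cons-free'') is a first-order, call-by-value functional language over booleans and bit lists $\{0,1\}^*$. A program is a finite sequence of mutually recursive function definitions $\mathtt{f\ x1 \dots xm = e}$ ($m\ge0$), the first being a one-argument entry function. Expressions are $\mathtt{True}$, $\mathtt{False}$, $\mathtt{[]}$, variables, base calls $\mathtt{not\ e}$, $\mathtt{null\ e}$, $\mathtt{head\ e}$, $\mathtt{tail\ e}$, conditionals $\mathtt{if\ e_0\ then\ e_1\ else\ e_2}$, and calls $\mathtt{f\ e_1\dots e_m}$ of defined functions; there are no list constructors. Semantics is standard big-step call-by-value evaluation given by inference rules deriving $\mathtt{p},\rho\vdash\mathtt{e}\to v$; the derivation tree for the run on input $x$ is the computation tree $\mathcal{T}^{\mathtt{p},x}$, and the native running time $\mathit{time}_{\mathtt{p}}(x)$ is the number of nodes of $\mathcal{T}^{\mathtt{p},x}$. A CF program has call overlap if, on some input, it calls the same defined function more than once with the same tuple of argument values. CFpoly is the class of CF programs that terminate in polynomial (native) time. *)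

(* Defs.v *)
From Stdlib Require Import List Arith.
Import ListNotations.

(* Values: booleans and bit lists (bit 0 = false, bit 1 = true). *)
Inductive value : Type :=
| VBool : bool -> value
| VList : list bool -> value.

(* Expressions; variables are de Bruijn-style indices into the parameter
   list of the enclosing function definition; functions are referred to by
   their position in the program. *)
Inductive expr : Type :=
| ETrue | EFalse | ENil
| EVar  : nat -> expr
| ENot  : expr -> expr
| ENull : expr -> expr
| EHead : expr -> expr
| ETail : expr -> expr
| EIf   : expr -> expr -> expr -> expr
| ECall : nat -> list expr -> expr.

(* A program: a finite sequence of definitions  f x1 .. xm = e,
   each given as (m, e).  The first one is the entry function. *)
Definition program := list (nat * expr).

Fixpoint wf_expr (p : program) (m : nat) (e : expr) : Prop :=
  match e with
  | ETrue | EFalse | ENil => True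
  | EVar i => i < m
  | ENot e | ENull e | EHead e | ETail e => wf_expr p m e
  | EIf e0 e1 e2 => wf_expr p m e0 /\ wf_expr p m e1 /\ wf_expr p m e2
  | ECall f args =>
      (exists b, nth_error p f = Some (length args, b)) /\
      (fix go (l : list expr) : Prop :=
         match l with [] => True | a :: l => wf_expr p m a /\ go l end) args
  end.

Definition wf_program (p : program) : Prop :=
  (exists b, nth_error p 0 = Some (1, b)) /\
  Forall (fun d => wf_expr p (fst d) (snd d)) p.

(* Big-step call-by-value semantics  p, rho |- e -> v.  Derivations are
   Type-valued, so a derivation is a computation tree. head/tail of [] and
   ill-typed base calls have no rule. *)
Inductive eval (p : program) : list value -> expr -> value -> Type :=
| ev_true  rho : eval p rho ETrue (VBool true)
| ev_false rho : eval p rho EFalse (VBool false)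
| ev_nil   rho : eval p rho ENil (VList [])
| ev_var   rho i v : nth_error rho i = Some v -> eval p rho (EVar i) v
| ev_not   rho e b : eval p rho e (VBool b) -> eval p rho (ENot e) (VBool (negb b))
| ev_null  rho e l : eval p rho e (VList l) ->
                     eval p rho (ENull e) (VBool (match l with [] => true | _ => false end))
| ev_head  rho e b l : eval p rho e (VList (b :: l)) -> eval p rho (EHead e) (VBool b)
| ev_tail  rho e b l : eval p rho e (VList (b :: l)) -> eval p rho (ETail e) (VList l)
| ev_if_t  rho e0 e1 e2 v : eval p rho e0 (VBool true) -> eval p rho e1 v ->
                            eval p rho (EIf e0 e1 e2) v
| ev_if_f  rho e0 e1 e2 v : eval p rho e0 (VBool false) -> eval p rho e2 v ->
                            eval p rho (EIf e0 e1 e2) v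
| ev_call  rho f args vs body v :
    nth_error p f = Some (length args, body) ->
    evals p rho args vs -> eval p vs body v -> eval p rho (ECall f args) v
with evals (p : program) : list value -> list expr -> list value -> Type :=
| evs_nil  rho : evals p rho [] []
| evs_cons rho e es v vs : eval p rho e v -> evals p rho es vs ->
                           evals p rho (e :: es) (v :: vs).

Fixpoint size {p rho e v} (d : eval p rho e v) : nat :=
  match d with
  | ev_true _ _ | ev_false _ _ | ev_nil _ _ | ev_var _ _ _ _ _ => 1
  | ev_not _ _ _ _ d1 | ev_null _ _ _ _ d1
  | ev_head _ _ _ _ _ d1 | ev_tail _ _ _ _ _ d1 => 1 + size d1
  | ev_if_t _ _ _ _ _ _ d0 d1 | ev_if_f _ _ _ _ _ _ d0 d1 => 1 + size d0 + size d1
  | ev_call _ _ _ _ _ _ _ _ ds db => 1 + sizes ds + size db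
  end
with sizes {p rho es vs} (ds : evals p rho es vs) : nat :=
  match ds with
  | evs_nil _ _ => 0
  | evs_cons _ _ _ _ _ _ d ds => size d + sizes ds
  end.

Fixpoint calls {p rho e v} (d : eval p rho e v) : list (nat * list value) :=
  match d with
  | ev_true _ _ | ev_false _ _ | ev_nil _ _ | ev_var _ _ _ _ _ => []
  | ev_not _ _ _ _ d1 | ev_null _ _ _ _ d1
  | ev_head _ _ _ _ _ d1 | ev_tail _ _ _ _ _ d1 => calls d1
  | ev_if_t _ _ _ _ _ _ d0 d1 | ev_if_f _ _ _ _ _ _ d0 d1 => calls d0 ++ calls d1
  | @ev_call _ _ f _ vs _ _ _ ds db => (f, vs) :: callss ds ++ calls db
  end
with callss {p rho es vs} (ds : evals p rho es vs) : list (nat * list value) :=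
  match ds with
  | evs_nil _ _ => []
  | evs_cons _ _ _ _ _ _ d ds => calls d ++ callss ds
  end.

Definition run (p : program) (x : list bool) (v : value) : Type :=
  eval p [VList x] (ECall 0 [EVar 0]) v.

Definition terminates (p : program) : Prop :=
  forall x, exists v, inhabited (run p x v).

Definition no_call_overlap (p : program) : Prop :=
  forall x v (d : run p x v), NoDup (calls d).

Definition poly_time (p : program) : Prop :=
  exists a k : nat, forall x v (d : run p x v), size d <= a * length x ^ k + a.

(* Main.v *)
Require Import Defs.
From Stdlib Require Import List Arith Lia.
Import ListNotations.

Scheme eval_ind2 := Induction for eval Sort Prop
  with evals_ind2 := Induction for evals Sort Prop.

Fixpoint esize (e : expr) : nat :=
  match e with
  | ETrue | EFalse | ENil | EVar _ => 1
  | ENot e | ENull e | EHead e | ETail e => 1 + esize e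
  | EIf e0 e1 e2 => 1 + esize e0 + esize e1 + esize e2
  | ECall _ args => 1 + (fix go l := match l with [] => 0 | a :: l => esize a + go l end) args
  end.

Fixpoint esizes (l : list expr) : nat :=
  match l with [] => 0 | a :: l => esize a + esizes l end.

Lemma esize_call f args : esize (ECall f args) = 1 + esizes args.
Proof. simpl. f_equal. Qed.

Definition bodyM (p : program) := fold_right (fun d acc => esize (snd d) + acc) 0 p.
Definition arA (p : program) := fold_right (fun d acc => fst d + acc) 0 p.

Lemma bodyM_ge p f n b : nth_error p f = Some (n, b) -> esize b <= bodyM p /\ n <= arA p.
Proof.
  revert f; induction p as [|d p IH]; intros [|f] H; simpl in *; try discriminate.
  - inversion H; subst; simpl; lia.
  - destruct (IH f H); lia.
Qed.

Lemma size_bound p M (HM : forall f n b, nth_error p f = Some (n, b) -> esize b <= M) :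
  forall rho e v (d : eval p rho e v), size d <= length (calls d) * (M + 1) + esize e.
Proof.
  intros rho e v d.
  apply (eval_ind2 p
    (fun rho e v d => size d <= length (calls d) * (M + 1) + esize e)
    (fun rho es vs ds => sizes ds <= length (callss ds) * (M + 1) + esizes es));
  intros; cbn [size sizes calls callss]; rewrite ?length_app; cbn [length].
  all: try (simpl esize; simpl esizes; lia).
  rewrite esize_call. specialize (HM _ _ _ e0). rewrite length_app. nia.
Qed.

Fixpoint suffixes (x : list bool) : list (list bool) :=
  match x with [] => [[]] | b :: l => (b :: l) :: suffixes l end.

Lemma suffixes_nil x : In [] (suffixes x).
Proof. induction x; simpl; auto. Qed.

Lemma suffixes_tail x b l : In (b :: l) (suffixes x) -> In l (suffixes x).
Proof.
  induction x as [|c x IH]; simpl; intros H.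
  - destruct H as [H|[]]; discriminate.
  - destruct H as [H|H].
    + inversion H; subst. right. destruct l; simpl; auto.
    + auto.
Qed.

Lemma suffixes_length x : length (suffixes x) = S (length x).
Proof. induction x; simpl; auto. Qed.

Definition goodv (x : list bool) : list value :=
  VBool true :: VBool false :: map VList (suffixes x).

Fixpoint alltup {T} (n : nat) (G : list T) : list (list T) :=
  match n with
  | 0 => [[]]
  | S n => [] :: flat_map (fun g => map (cons g) (alltup n G)) G
  end.

Lemma alltup_in {T} n (G : list T) vs :
  length vs <= n -> Forall (fun w => In w G) vs -> In vs (alltup n G).
Proof.
  revert vs; induction n; intros [|w vs] Hl HF; simpl in *; auto; try lia.
  right. inversion HF; subst. apply in_flat_map. exists w; split; auto.
  apply in_map. apply IHn; auto; lia.
Qed.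

Lemma alltup_length {T} n (G : list T) : length (alltup n G) <= (S (length G)) ^ n.
Proof.
  induction n; simpl; auto.
  assert (Hf : forall G', length (flat_map (fun g => map (cons g) (alltup n G)) G')
                 = length G' * length (alltup n G)).
  { induction G'; simpl; auto. rewrite length_app, length_map, IHG'. lia. }
  rewrite Hf.
  assert (1 <= S (length G) ^ n) by (apply Nat.neq_0_lt_0, Nat.pow_nonzero; lia).
  nia.
Qed.

Lemma good_inv p x :
  forall rho e v (d : eval p rho e v),
  Forall (fun w => In w (goodv x)) rho ->
  In v (goodv x) /\
  Forall (fun c => In c (list_prod (seq 0 (length p)) (alltup (arA p) (goodv x)))) (calls d).
Proof.
  intros rho e v d.
  apply (eval_ind2 p
    (fun rho e v d => Forall (fun w => In w (goodv x)) rho ->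
      In v (goodv x) /\
      Forall (fun c => In c (list_prod (seq 0 (length p)) (alltup (arA p) (goodv x)))) (calls d))
    (fun rho es vs ds => Forall (fun w => In w (goodv x)) rho ->
      Forall (fun w => In w (goodv x)) vs /\ length vs = length es /\
      Forall (fun c => In c (list_prod (seq 0 (length p)) (alltup (arA p) (goodv x)))) (callss ds)));
  intros; simpl in *.
  - split; auto.
  - split; auto.
  - split; auto. right; right. apply in_map, suffixes_nil.
  - split; [|constructor]. match goal with Hn : nth_error _ _ = Some _, HF : Forall _ _ |- _ => rewrite Forall_forall in HF; apply HF; eapply nth_error_In; exact Hn end.
  - destruct (H H0). split; auto. destruct b; simpl; auto.
  - destruct (H H0). split; auto. destruct l; simpl; auto.
  - destruct (H H0). split; auto. destruct b; simpl; auto.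
  - destruct (H H0). split; auto. unfold goodv in *.
    destruct H1 as [H1|[H1|H1]]; try discriminate.
    right; right. apply in_map_iff in H1. destruct H1 as [s [Hs Hin]].
    inversion Hs; subst. apply in_map. eapply suffixes_tail; eauto.
  - destruct (H H1), (H0 H1). split; auto. apply Forall_app; auto.
  - destruct (H H1), (H0 H1). split; auto. apply Forall_app; auto.
  - destruct (H H1) as [Hvs [Hlen Hc]]. destruct (H0 Hvs) as [Hv Hcb].
    split; auto. constructor.
    + apply in_prod.
      * apply in_seq. split; [lia|]. simpl.
        apply nth_error_Some. rewrite e0. discriminate.
      * apply alltup_in; auto. destruct (bodyM_ge _ _ _ _ e0). lia.
    + apply Forall_app; auto.
  - auto.
  - destruct (H H1) as [Hv Hc], (H0 H1) as [Hvs [Hl Hcs]].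
    split; [constructor; auto|]. split; [simpl; lia|]. apply Forall_app; auto.
Qed.

Lemma pow_bound n A : (n + 4) ^ A <= 5 ^ A * (n ^ A + 1).
Proof.
  destruct n as [|n].
  - simpl. assert (4 ^ A <= 5 ^ A) by (apply Nat.pow_le_mono_l; lia). nia.
  - assert ((S n + 4) ^ A <= (5 * S n) ^ A) by (apply Nat.pow_le_mono_l; lia).
    rewrite Nat.pow_mul_l in H. nia.
Qed.

Theorem lemma6 (p : program) :
  wf_program p -> terminates p -> no_call_overlap p -> poly_time p.
Proof.
  intros _ _ Hnco.
  set (M := bodyM p). set (A := arA p).
  exists (length p * 5 ^ A * (M + 1) + 2), A.
  intros x v d.
  pose proof (size_bound p M (fun f n b H => proj1 (bodyM_ge p f n b H)) _ _ _ d) as Hs.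
  simpl in Hs.
  destruct (good_inv p x _ _ _ d) as [_ Hc].
  { constructor; auto. right; right. apply in_map. destruct x; simpl; auto. }
  pose proof (Hnco x v d) as Hnd.
  assert (Hl : length (calls d) <= length (list_prod (seq 0 (length p)) (alltup (arA p) (goodv x)))).
  { apply NoDup_incl_length; auto. intros c Hin. rewrite Forall_forall in Hc; auto. }
  rewrite length_prod, length_seq in Hl.
  pose proof (alltup_length (arA p) (goodv x)) as Ht.
  unfold goodv in Ht. simpl in Ht. rewrite length_map, suffixes_length in Ht.
  pose proof (pow_bound (length x) A) as Hp.
  replace (S (S (S (S (length x))))) with (length x + 4) in Ht by lia.
  fold A in Ht, Hl.
  set (T := length x ^ A) in *.
  set (L := length (alltup A (goodv x))) in *.
  set (P := 5 ^ A) in *.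
  assert (HL : L <= P * (T + 1)) by (unfold L; change (alltup A (goodv x)) with (alltup A (VBool true :: VBool false :: map VList (suffixes x))); lia).
  assert (Hc2 : length (calls d) <= length p * (P * (T + 1))) by (eapply Nat.le_trans; [exact Hl|]; apply Nat.mul_le_mono_l; exact HL).
  clear - Hs Hc2. set (c := length (calls d)) in *. set (n := length p) in *. nia.
Qed.
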